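(* Let $k\ge 2$, let $G$ be a $\Gamma_{\times k,t}$-external graph with $\delta(G)\ge k$, and let $H$ be a graph. (i) If $\delta(H)\ge k+1$, then $\Gamma_{\times k,t}(G\,\Box\,H)\ge\Gamma_{\times k,t}(G)\big(\Gamma_{\times k,t}(H)+\delta(H)-k\big)$. (ii) If $H$ is $k$-regular, then $\Gamma_{\times k,t}(G\,\Box\,H)\ge\Gamma_{\times k,t}(G)\cdot\Gamma_{\times k,t}(H)$.
   Context: A set $S\subseteq V(G)$ is a $k$-tuple total dominating set ($k$TDS) of a graph $G$ with $\delta(G)\ge k$ if $|N_G(x)\cap S|\ge k$ for every $x\in V(G)$. The upper $k$-tuple total domination number $\Gamma_{\times k,t}(G)$ is the maximum cardinality of a minimal (with respect to inclusion) $k$TDS of $G$; a minimal $k$TDS of this cardinality is a $\Gamma_{\times k,t}$-set. For $v\in S$, a vertex $v'$ is a $k$-open private neighbor of $v$ with respect to $S$ if $v\in N_G(v')$ and $|N_G(v')\cap S|=k$; it is external if $v'\notin S$. A graph $G$ is $\Gamma_{\times k,t}$-external if it has a $\Gamma_{\times k,t}$-set $S$ such that every vertex of $S$ has an external $k$-open private neighbor with respect to $S$. The Cartesian product $G\,\Box\,H$ has vertex set $V(G)\times V(H)$, with $(g_1,h_1)\sim(g_2,h_2)$ iff either $g_1=g_2$ and $h_1h_2\in E(H)$, or $h_1=h_2$ and $g_1g_2\in E(G)$. *)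

(* Defs.v *)
From mathcomp Require Import all_boot.
Set Implicit Arguments. Unset Strict Implicit. Unset Printing Implicit Defensive.

Section Graphs.
Variable T : finType.
Implicit Types (e : rel T) (S : {set T}) (k : nat).

Definition simple_graph e := irreflexive e /\ symmetric e.

Definition nbhd e (x : T) : {set T} := [set y | e x y].

(* minimum degree delta(G); the default #|T| is irrelevant for nonempty T *)
Definition mindeg e : nat := \big[minn/#|T|]_(x : T) #|nbhd e x|.

Definition regular e k := forall x : T, #|nbhd e x| = k.

Definition is_kTDS e k S : bool := [forall x : T, k <= #|nbhd e x :&: S|].

Definition is_min_kTDS e k S : bool :=
  is_kTDS e k S && [forall S' : {set T}, (S' \proper S) ==> ~~ is_kTDS e k S'].

Definition upper_kTDN e k : nat := \max_(S : {set T} | is_min_kTDS e k S) #|S|.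

Definition is_Gamma_set e k S : bool := is_min_kTDS e k S && (#|S| == upper_kTDN e k).

Definition ext_kopn e k S (v v' : T) : bool :=
  [&& v \in nbhd e v', v' \notin S & #|nbhd e v' :&: S| == k].

Definition Gamma_external e k : Prop :=
  exists S : {set T}, is_Gamma_set e k S /\
    forall v, v \in S -> exists v' : T, ext_kopn e k S v v'.
End Graphs.

Definition cartesian (T1 T2 : finType) (e1 : rel T1) (e2 : rel T2) : rel (T1 * T2) :=
  fun u w => ((u.1 == w.1) && e2 u.2 w.2) || ((u.2 == w.2) && e1 u.1 w.1).

(* Main.v *)
Require Import Defs.
From mathcomp Require Import all_boot.
From mathcomp Require Import zify.

Lemma mindeg_le (T : finType) (e : rel T) x : mindeg e <= #|nbhd e x|.
Proof.
rewrite /mindeg; have := mem_index_enum x.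
elim: (index_enum T) => [|y r IH] //; rewrite inE big_cons => /orP [/eqP <-|/IH].
  exact: geq_minl.
by move=> H; rewrite geq_min H orbT.
Qed.

Lemma mindeg_card (T : finType) (e : rel T) : mindeg e <= #|T|.
Proof.
rewrite /mindeg; elim/big_ind: _ => //.
- by move=> a b Ha _; exact: leq_trans (geq_minl _ _) Ha.
- by move=> i _; exact: max_card.
Qed.

Lemma upper_le_card (T : finType) (e : rel T) k : upper_kTDN e k <= #|T|.
Proof. by apply/bigmax_leqP => S _; exact: max_card. Qed.

Lemma upper_ge (T : finType) (e : rel T) k S :
  is_min_kTDS e k S -> #|S| <= upper_kTDN e k.
Proof. by move=> HS; rewrite /upper_kTDN (bigD1 S) //= leq_maxl. Qed.

Lemma min_bound (T : finType) (e : rel T) k D :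
  is_min_kTDS e k D -> #|D| + mindeg e <= #|T| + k.
Proof.
case/andP=> /forallP HD /forallP Hmin.
case: (set_0Vmem D) => [-> | [v vD]].
  by rewrite cards0 add0n; have := @mindeg_card _ e; lia.
have := Hmin (D :\ v); rewrite properD1 // implyTb negb_forall.
case/existsP => u; rewrite -ltnNge => Hu.
have Hk := HD u.
move: Hu; rewrite setIDA => Hu.
have E1 := cardsD1 v (nbhd e u :&: D).
have E2 := cardsID D (nbhd e u).
have E3 := cardsC D.
have H4 : #|nbhd e u :\: D| <= #|~: D|.
  by apply: subset_leq_card; rewrite setDE subsetIr.
have H5 := @mindeg_le _ e u.
have : (v \in nbhd e u :&: D) <= 1 by case: (v \in _).
lia.
Qed.

Lemma upper_bound (T : finType) (e : rel T) k :
  upper_kTDN e k + mindeg e <= #|T| + k.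
Proof.
rewrite /upper_kTDN.
have [/eqP A0|Apos] := posnP #|[pred S : {set T} | is_min_kTDS e k S]|.
  rewrite big_pred0; last by move=> S; move/eqP: A0 => /card0_eq/(_ S).
  by rewrite add0n; have := @mindeg_card _ e; lia.
have [D HD ->] := eq_bigmax_cond (fun S : {set T} => #|S|) Apos.
exact: min_bound HD.
Qed.

Lemma prod_bound (T1 T2 : finType) (g : rel T1) (h : rel T2) (k : nat) :
  Gamma_external g k ->
  upper_kTDN g k * #|T2| <= upper_kTDN (cartesian g h) k.
Proof.
case=> S [/andP [HS /eqP <-] Hext].
case/andP: HS => /forallP HS _.
set P := setX S [set: T2].
have <- : #|P| = #|S| * #|T2| by rewrite cardsX cardsT.
apply: upper_ge.
apply/andP; split.
  apply/forallP => [[a b]].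
  have Hinj : injective (fun y : T1 => (y, b)) by move=> x y [].
  apply: (leq_trans (HS a)).
  rewrite -(card_imset (nbhd g a :&: S) Hinj).
  apply: subset_leq_card; apply/subsetP => z /imsetP [y].
  rewrite !inE => /andP [Hay yS] ->.
  by rewrite /cartesian /= eqxx Hay orbT yS.
apply/forallP => P'; apply/implyP => HP'.
case/properP: HP' => HP'P [[s b]].
rewrite !inE andbT => sS sP'.
have [s' /and3P [Hs' s'S /eqP Hk]] := Hext s sS.
rewrite negb_forall; apply/existsP; exists (s', b).
rewrite -ltnNge.
have Hinj : injective (fun y : T1 => (y, b)) by move=> x y [].
set A := [set (y, b) | y in nbhd g s' :&: S].
have cA : #|A| = k by rewrite card_imset.
have sbA : (s, b) \in A by apply/imsetP; exists s => //; rewrite inE Hs' sS.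
have Hsub : nbhd (cartesian g h) (s', b) :&: P' \subset A :\ (s, b).
  apply/subsetP => [[y1 y2]]; rewrite !inE => /andP [Hadj yP'].
  have yP := subsetP HP'P _ yP'.
  move: yP; rewrite !inE andbT => y1S.
  apply/andP; split.
    by apply/negP => /eqP E; move: yP' sP'; rewrite E => ->.
  move: Hadj; rewrite /cartesian /=.
  case/orP => /andP [/eqP E H].
    by move: s'S; rewrite E y1S.
  apply/imsetP; exists y1; first by rewrite !inE H y1S.
  by rewrite E.
have := subset_leq_card Hsub.
have := cardsD1 (s, b) A; rewrite sbA cA.
move: (Hk); lia.
Qed.

Theorem mainTheorem12 (T1 T2 : finType) (g : rel T1) (h : rel T2) (k : nat) :
  2 <= k ->
  simple_graph g -> simple_graph h ->
  0 < #|T1| -> 0 < #|T2| ->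
  k <= mindeg g ->
  Gamma_external g k ->
  (k.+1 <= mindeg h ->
     upper_kTDN g k * (upper_kTDN h k + mindeg h - k)
       <= upper_kTDN (cartesian g h) k) /\
  (regular h k ->
     upper_kTDN g k * upper_kTDN h k <= upper_kTDN (cartesian g h) k).
Proof.
move=> _ _ _ _ _ _ Hext.
have Hp := @prod_bound _ _ g h k Hext.
split => _.
  apply: leq_trans Hp; apply: leq_mul => //.
  have := @upper_bound _ h k; lia.
apply: leq_trans Hp; apply: leq_mul => //.
exact: upper_le_card.
Qed.
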